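(* Let $\mathcal{F}\subseteq 2^{\mathcal{P}}$. The zero locus in $\mathbb{B}^n$ of the polynomial $\lambda(\bar T)=\prod_{F\in\mathcal{F}}\gamma(\varphi(F),\bar T)\in\mathbb{B}(\bar T)$ is exactly $\varphi(\mathcal{F}^* )=\{\varphi(F'):F'\in\mathcal{F}^*\}$.
   Context: $\mathbb{B}=\mathbb{F}_2$, $\mathcal{P}=\{P_1,\ldots,P_n\}$, $\mathbb{B}(\bar T)=\mathbb{F}_2[T_1,\ldots,T_n]/\langle T_i^2-T_i\rangle$. $\varphi:2^{\mathcal{P}}\to\mathbb{B}^n$ sends a set to its indicator vector. $\gamma(\bar X,\bar Y)=\prod_{i=1}^n(X_iY_i+Y_i+1)+1$. $\mathcal{F}^*=\{F'\subseteq F: F\in\mathcal{F}\}$. *)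

(* Defs.v *)
From HB Require Import structures.
From mathcomp Require Import all_boot all_algebra.
From mathcomp Require Import mpoly.
Set Implicit Arguments. Unset Strict Implicit. Unset Printing Implicit Defensive.
Import GRing.Theory.
Local Open Scope ring_scope.

(* B = F_2 ; P = {P_1,...,P_n} is represented by 'I_n ; points of B^n are
   finite functions 'I_n -> 'F_2. *)

Definition phi (n : nat) (F : {set 'I_n}) : {ffun 'I_n -> 'F_2} :=
  [ffun i => (i \in F)%:R].

Definition gammaP (n : nat) (x : 'I_n -> 'F_2) : {mpoly 'F_2[n]} :=
  \prod_(i < n) (x i *: 'X_i + 'X_i + 1) + 1.

Definition lambdaP (n : nat) (Fam : {set {set 'I_n}}) : {mpoly 'F_2[n]} :=
  \prod_(F in Fam) gammaP (phi F).

Definition Fstar (n : nat) (Fam : {set {set 'I_n}}) : {set {set 'I_n}} :=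
  [set F' : {set 'I_n} | [exists F in Fam, F' \subset F]].

Definition zero_locus (n : nat) (p : {mpoly 'F_2[n]}) : {set {ffun 'I_n -> 'F_2}} :=
  [set v : {ffun 'I_n -> 'F_2} | p.@[v] == 0].

(* Main.v *)
Require Import Defs.
From mathcomp Require Import all_boot all_algebra.
From mathcomp Require Import mpoly.
Set Implicit Arguments. Unset Strict Implicit. Unset Printing Implicit Defensive.
Import GRing.Theory.
Local Open Scope ring_scope.

Lemma F2_cases (x : 'F_2) : x = 0 \/ x = 1.
Proof. case: x => [[|[|k]] Hk]; [left|right|]; try exact: val_inj. by []. Qed.

Lemma factor_eq0 (x : 'F_2) (y : 'F_2) :
  (x * y + y + 1 == 0) = (y == 1) && (x != 1).
Proof. by case: (F2_cases x) => ->; case: (F2_cases y) => ->. Qed.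

Lemma gamma_eval n (x : 'I_n -> 'F_2) (v : 'I_n -> 'F_2) :
  ((gammaP x).@[v] == 0) = [forall i, (v i == 1) ==> (x i == 1)].
Proof.
rewrite /gammaP mevalD meval1 rmorph_prod /=.
under eq_bigr => i _ do rewrite !mevalD mevalZ mevalXU meval1.
have [H|H] := boolP [forall i, (v i == 1) ==> (x i == 1)].
  have -> : \prod_(i < n) (x i * v i + v i + 1) = 1.
    have : (\prod_(i < n) (x i * v i + v i + 1) == 0) = false.
      apply/negbTE/prodf_eq0 => -[i _]; rewrite factor_eq0.
      move/forallP: H => /(_ i); by case: (v i == 1); case: (x i == 1).
    by case: (F2_cases (\prod_(i < n) (x i * v i + v i + 1))) => ->.
  by [].
have -> : \prod_(i < n) (x i * v i + v i + 1) = 0.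
  apply/eqP/prodf_eq0; move/forallPn: H => [i Hi]; exists i => //.
  rewrite factor_eq0; move: Hi; by case: (v i == 1); case: (x i == 1).
by [].
Qed.

Theorem mainTheorem12 (n : nat) (Fam : {set {set 'I_n}}) :
  zero_locus (lambdaP Fam) = [set phi F' | F' in Fstar Fam].
Proof.
apply/setP => v; rewrite /zero_locus inE /lambdaP rmorph_prod /=.
apply/prodf_eq0/idP.
- case => F FF; rewrite gamma_eval => /forallP H.
  apply/imsetP; exists [set i | v i == 1].
    rewrite /Fstar inE; apply/existsP; exists F; rewrite FF /=.
    apply/subsetP => i; rewrite inE => /(implyP (H i)); rewrite /phi ffunE.
    by case: (i \in F).
  apply/ffunP => i; rewrite /phi !ffunE inE.
  by case: (F2_cases (v i)) => ->.
- case/imsetP => F'; rewrite /Fstar inE => /existsP [F /andP [FF sub]] ->.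
  exists F => //; rewrite gamma_eval; apply/forallP => i.
  rewrite /phi !ffunE; apply/implyP.
  have [iF|iF] := boolP (i \in F'); first by rewrite (subsetP sub _ iF).
  by [].
Qed.
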